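(* For every fixed $x\in\mathbb{R}$, $$\lim_{n\to+\infty}n(2\ln n)^{1/2}D_n(F_n(x)/2)=e^{c_0-x},$$ where $F_n(x)=\dfrac{8x+3\ln(2\ln n)}{2n(2\ln n)^{1/2}}+\dfrac{(32\ln n)^{1/2}}{n}$.
   Context: For $\alpha\in(0,\pi)$ let $D_n(\alpha)=\det_{1\le j,l\le n}\left(\frac{1}{2\pi}\int_\alpha^{2\pi-\alpha}e^{i(j-l)\theta}\,d\theta\right)$ (the probability that a Haar unitary $n\times n$ matrix has no eigenvalue on a given arc of length $2\alpha$). By a result of Deift–Its–Krasovsky–Zhou there are constants $c_0\in\mathbb{R}$ and $s_0>0$ such that for every $\varepsilon>0$, uniformly in $s_0/n<\alpha<\pi-\varepsilon$, $$\ln D_n(\alpha)=n^2\ln\cos\frac{\alpha}{2}-\frac14\ln\Big(n\sin\frac{\alpha}{2}\Big)+c_0+O\Big(\frac{1}{n\sin(\alpha/2)}\Big).$$ $c_0$ denotes this constant. *)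

(* Defs.v *)
From HB Require Import structures.
From mathcomp Require Import all_boot all_order all_algebra.
From mathcomp Require Import all_classical all_reals.
From mathcomp Require Import topology normedtype sequences exp trigo measure
  lebesgue_measure lebesgue_integral.
From mathcomp Require Import complex.
Set Implicit Arguments. Unset Strict Implicit. Unset Printing Implicit Defensive.
Import Order.TTheory GRing.Theory Num.Theory.
Import numFieldNormedType.Exports.
Local Open Scope ring_scope.
Local Open Scope classical_set_scope.
Local Open Scope complex_scope.

(* (1/2pi) * int_a^{2pi-a} e^{i k theta} d theta, the complex integral
   being taken componentwise (real part: cos, imaginary part: sin). *)
Definition arc_coef (R : realType) (k : int) (a : R) : R[i] :=
  ((2 * pi)^-1)%:C *
  ((\int[@lebesgue_measure R]_(t in `[a, 2 * pi - a]) cos (k%:~R * t)) +i*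
   (\int[@lebesgue_measure R]_(t in `[a, 2 * pi - a]) sin (k%:~R * t))).

(* D_n(a) = det_{1<=j,l<=n} ( (1/2pi) int_a^{2pi-a} e^{i(j-l)theta} dtheta );
   indices shifted to 0..n-1, which does not change j - l. *)
Definition Dn (R : realType) (n : nat) (a : R) : R[i] :=
  \det (\matrix_(j < n, l < n) arc_coef ((j : nat)%:Z - (l : nat)%:Z) a).

Definition Fn (R : realType) (n : nat) (x : R) : R :=
  (8 * x + 3 * ln (2 * ln n%:R)) / (2 * n%:R * Num.sqrt (2 * ln n%:R))
  + Num.sqrt (32 * ln n%:R) / n%:R.

(* Main.v *)
Require Import Defs.
From HB Require Import structures.
From mathcomp Require Import all_boot all_order all_algebra.
From mathcomp Require Import all_classical all_reals.
From mathcomp Require Import topology normedtype sequences exp trigo measure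
  lebesgue_measure lebesgue_integral.
From mathcomp Require Import complex.
From mathcomp Require Import derive realfun.
From mathcomp Require Import ring lra.
Import Order.TTheory GRing.Theory Num.Theory.
Import numFieldNormedType.Exports.

Section S.
Local Open Scope classical_set_scope.
Local Open Scope ring_scope.
Variable R : realType.

Lemma ndecr0 (f df : R -> R) (y : R) : 0 <= y ->
  (forall z : R, is_derive z (1:R) f (df z)) -> (forall z, 0 <= z -> 0 <= df z) ->
  f 0 <= f y.
Proof.
move=> y0 hd hdf.
have dv : forall x : R, x \in `]0, y[ -> derivable f x 1.
  by move=> z _; exact: (@ex_derive _ _ _ _ _ _ _ (hd z)).
have dp : forall x : R, x \in `]0, y[ -> 0 <= derive1 f x.
  move=> z; rewrite in_itv /= => /andP[z0 _]; rewrite derive1E (@derive_val _ _ _ _ _ _ _ (hd z)).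
  by apply: hdf; apply: ltW.
have cf : {within `[0, y], continuous f}.
  apply: continuous_subspaceT => z.
  by apply/differentiable_continuous/derivable1_diffP; exact: (@ex_derive _ _ _ _ _ _ _ (hd z)).
exact: (@ger0_derive1_ndecr R f 0 y dv dp cf 0 y (lexx 0) y0 (lexx y)).
Qed.

Lemma sin_le_id (y : R) : 0 <= y -> sin y <= y.
Proof.
move=> y0.
have := @ndecr0 (fun z => z - sin z) (fun z => 1 - cos z) y y0.
rewrite sin0 subr0 subr_ge0; apply.
by move=> z _; rewrite subr_ge0 cos_le1.
Qed.

Lemma cos_ge (y : R) : 0 <= y -> 1 - y ^+ 2 / 2 <= cos y.
Proof.
move=> y0.
have := @ndecr0 (fun z => cos z + z * z / 2) (fun z => z - sin z) y y0.
rewrite cos0 mul0r mul0r addr0 => H.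
suff : 1 <= cos y + y * y / 2 by rewrite expr2; lra.
apply: H.
  move=> z. apply: is_derive_eq.
  rewrite scaler0 add0r.
  have -> : forall a b : R, a *: b = a * b by [].
  have -> : z%:A = z :> R by rewrite /GRing.scale /= mulr1.
  lra.
by move=> z z0; rewrite subr_ge0 sin_le_id.
Qed.

Lemma scE (a b : R) : a *: b = a * b. Proof. by []. Qed.

Lemma sin_ge (y : R) : 0 <= y -> y - y ^+ 3 / 6 <= sin y.
Proof.
move=> y0.
have := @ndecr0 (fun z => sin z - z + z * z * z / 6) (fun z => cos z - 1 + z * z / 2) y y0.
rewrite sin0 !mul0r subr0 addr0 => H.
suff : 0 <= sin y - y + y * y * y / 6.
  by rewrite (_ : y ^+ 3 = y * y * y); [lra | rewrite !exprS expr0 mulr1 mulrA].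
apply: H.
  move=> z. apply: is_derive_eq.
  rewrite !scE. rewrite mulr0 add0r !mulr1; by field.
move=> z z0; have := @cos_ge z z0; rewrite expr2; lra.
Qed.

Lemma cos_le (y : R) : 0 <= y -> cos y <= 1 - y ^+ 2 / 2 + y ^+ 4 / 24.
Proof.
move=> y0.
have := @ndecr0 (fun z => 1 - z * z / 2 + z * z * z * z / 24 - cos z) (fun z => sin z - z + z * z * z / 6) y y0.
rewrite cos0 !mul0r subr0 addr0 subrr => H.
suff : 0 <= 1 - y * y / 2 + y * y * y * y / 24 - cos y.
  rewrite (_ : y ^+ 4 = y * y * y * y); last by rewrite !exprS expr0 mulr1 !mulrA.
  by rewrite expr2; lra.
apply: H.
  move=> z. apply: is_derive_eq.
  rewrite !scE mulr0 add0r !mulr1; by field.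
move=> z z0; have := @sin_ge z z0; rewrite (_ : z ^+ 3 = z * z * z); [lra | by rewrite !exprS expr0 mulr1 mulrA].
Qed.

Lemma ln_le_sub1 (y : R) : 0 < y -> ln y <= y - 1.
Proof.
move=> y0; have h := @le_ln1Dx R (y - 1).
have e : 1 + (y - 1) = y by ring.
by rewrite e in h; apply: h; lra.
Qed.

Lemma ln_ge_sub1 (y : R) : 0 < y -> 1 - y^-1 <= ln y.
Proof.
move=> y0; have := @ln_le_sub1 y^-1; rewrite invr_gt0 => /(_ y0).
rewrite lnV ?posrE //; lra.
Qed.

Lemma ln_near1 (rho d : R) : d <= 1/2 -> `|rho - 1| <= d -> `|ln rho| <= 2 * d.
Proof.
move=> hd; rewrite ler_norml => /andP[h1 h2].
have r0 : 0 < rho by lra.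
have := ln_le_sub1 _ r0; have := ln_ge_sub1 _ r0 => a b.
rewrite ler_norml; apply/andP; split; last by lra.
suff : - (2 * d) <= 1 - rho^-1 by lra.
have e : 1 - rho^-1 = (rho - 1) / rho by field; lra.
rewrite e ler_pdivlMr //; nra.
Qed.

Lemma lncos_bound (th : R) : 0 <= th <= 1 -> `|ln (cos th) + th ^+ 2 / 2| <= th ^+ 4.
Proof.
move=> /andP[t0 t1].
have c1 := cos_ge _ t0; have c2 := cos_le _ t0.
have e4 : th ^+ 4 = th ^+ 2 * th ^+ 2 by rewrite -exprD.
have a0 : 0 <= th ^+ 2 by apply: sqr_ge0.
have a1 : th ^+ 2 <= 1 by rewrite expr_le1.
have cp : 0 < cos th by lra.
have := ln_le_sub1 _ cp; have := ln_ge_sub1 _ cp => a b.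
rewrite ler_norml; apply/andP; split; last by nra.
suff : - th ^+ 4 - th ^+ 2 / 2 <= 1 - (cos th)^-1 by lra.
have e : 1 - (cos th)^-1 = (cos th - 1) / cos th by field; lra.
rewrite e ler_pdivlMr //; nra.
Qed.

Lemma exp_near (a d : R) : `|d| <= 1/2 -> `|expR (a + d) - expR a| <= 2 * expR a * `|d|.
Proof.
move=> hd; rewrite expRD.
have ea := expR_gt0 a.
have -> : expR a * expR d - expR a = expR a * (expR d - 1) by ring.
rewrite normrM (gtr0_norm ea).
have -> : 2 * expR a * `|d| = expR a * (2 * `|d|) by ring.
rewrite ler_pM2l //.
have h1 := expR_ge1Dx d.
have h2 := expR_ge1Dx (- d).
rewrite expRN in h2.
have ed := expR_gt0 d.
move: hd; rewrite ler_norml => /andP[d1 d2].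
have h3 : expR d * (1 - d) <= 1.
  have : (1 - d) <= (expR d)^-1 by lra.
  rewrite -(ler_pM2l ed) mulfV ?gt_eqF //.
rewrite ler_norml; apply/andP; split.
  case: (lerP 0 d) => hd0; [rewrite ger0_norm // | rewrite ltr0_norm //]; lra.
case: (lerP 0 d) => hd0; [rewrite ger0_norm // | rewrite ltr0_norm //]; nra.
Qed.
End S.

Section C.
Local Open Scope ring_scope.
Variable R : realType.

Lemma theta_eq (n : nat) (q x : R) : 0 < q -> ln (n%:R : R) = q ^+ 4 / 2 ->
  0 < (n%:R : R) ->
  Fn n x / 2 / 2 = (q ^+ 2 + (x + 3 / 2 * ln q) / q ^+ 2) / n%:R.
Proof.
move=> q0 hL n0.
rewrite /Fn hL.
have e1 : Num.sqrt (2 * (q ^+ 4 / 2)) = q ^+ 2.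
  have -> : 2 * (q ^+ 4 / 2) = (q ^+ 2) ^+ 2 by rewrite -exprM; field.
  by rewrite sqrtr_sqr ger0_norm // exprn_ge0 // ltW.
have e2 : Num.sqrt (32 * (q ^+ 4 / 2)) = 4 * q ^+ 2.
  have -> : 32 * (q ^+ 4 / 2) = (4 * q ^+ 2) ^+ 2 by rewrite exprMn -exprM; field.
  by rewrite sqrtr_sqr ger0_norm // mulr_ge0 // exprn_ge0 // ltW.
have e3 : ln (2 * (q ^+ 4 / 2)) = 4 * ln q.
  have -> : 2 * (q ^+ 4 / 2) = q ^+ 4 by field.
  by rewrite lnXn // mulr_natl.
rewrite e1 e2 e3.
have q2 : q ^+ 2 != 0 by rewrite expf_neq0 // gt_eqF.
field; by rewrite !gt_eqF.
Qed.

Lemma sum4 (a b c d ea eb ec ed : R) : `|a| <= ea -> `|b| <= eb -> `|c| <= ec ->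
  `|d| <= ed -> `|a - b - c + d| <= ea + eb + ec + ed.
Proof.
move=> ha hb hc hd.
have t1 := ler_normD (a - b - c) d.
have t2 := ler_normD (a - b) (- c); rewrite normrN in t2.
have t3 := ler_normB a b.
lra.
Qed.


Lemma S1 (q x s t : R) : 4 <= q -> `|x| <= q -> s = q * q -> t = x + 3 / 2 * ln q ->
  [/\ 16 <= s, q <= s, q * `|t / s| <= 5 / 2, `|t / s| <= 5 / 8 &
      `|t ^+ 2 / (2 * (s * s))| <= 4 / q].
Proof.
move=> q4 hx sE tD.
have q0 : 0 < q by lra.
have s16 : 16 <= s by nra.
have s0 : 0 < s by lra.
have lq0 : 0 <= ln q by apply: ln_ge0; lra.
have lq1 : ln q <= q - 1 by apply: ln_le_sub1.
have ht : `|t| <= 5 / 2 * q.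
  move: hx; rewrite tD !ler_norml => /andP[? ?]; apply/andP; split; lra.
have at0 : 0 <= `|t| by [].
have hts : q * `|t / s| <= 5 / 2.
  rewrite normrM normfV (gtr0_norm s0) mulrA ler_pdivrMr // sE; nra.
split => //.
- nra.
- have : 4 * `|t / s| <= q * `|t / s| by apply: ler_wpM2r.
  lra.
rewrite ger0_norm; last by apply: divr_ge0; [apply: sqr_ge0 | nra].
rewrite ler_pdivrMr; last by nra.
have : t ^+ 2 <= 25 / 4 * (q * q).
  move: ht; rewrite ler_norml => /andP[ht1 ht2].
  have : 0 <= (5 / 2 * q - t) * (5 / 2 * q + t) by apply: mulr_ge0; lra.
  rewrite expr2; nra.
have -> : 4 / q * (2 * (s * s)) = 8 * (q * q * q) by rewrite sE; field; rewrite gt_eqF.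
have : q * q <= q * q * q by nra.
lra.
Qed.

Lemma S2 (q s u N th : R) : 4 <= q -> s = q * q -> 16 <= s -> s - 1 <= u -> u <= s + 1 ->
  s * s * (s * s) / 8 <= N -> N * th = u -> 0 < N ->
  [/\ 0 < th, q * th <= 1, th <= 1, 0 <= u * th &
     [/\ u * th <= 1 / 8, q * (u * th * th) <= 1 / 8, u * th * th <= 1 / 8 &
        (u * th) * (u * th) <= 32 / q]].
Proof.
move=> q4 sE s16 u1 u2 hN hNth n0.
have q0 : 0 < q by lra.
have u0 : 0 < u by lra.
have th0 : 0 < th.
  have : 0 < N * th by lra.
  by rewrite pmulr_rgt0.
have ths : th * (s * s * s) <= 16.
  have : N * (th * (s * s * s)) <= N * 16.
    rewrite mulrA hNth; nra.
  by rewrite ler_pM2l.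
have thq : q * th <= 1.
  have : 16 * q <= s * s * s by nra.
  nra.
have th1 : th <= 1 by nra.
set v := u * th.
have v0 : 0 <= v by apply: mulr_ge0; lra.
have vs : v * (s * s) <= 32 by rewrite /v; nra.
have ss : 256 <= s * s by nra.
have v8 : v <= 1 / 8 by have := ler_wpM2l v0 ss; lra.
split => //; split => //.
- have : v * (q * th) <= v by have := ler_wpM2l v0 thq; rewrite mulr1.
  lra.
- have : v * th <= v by have := ler_wpM2l v0 th1; rewrite mulr1.
  lra.
have v1 : v <= 1 by lra.
have vv : v * v <= v by have := ler_wpM2l v0 v1; rewrite mulr1.
have qss : q <= s * s by nra.
have vq : v * q <= v * (s * s) by apply: ler_wpM2l.
rewrite ler_pdivlMr //.
have : v * v * q <= v * q by apply: ler_wpM2r; lra.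
lra.
Qed.

Lemma S4 (q s u th v w M t : R) : 0 < q -> q <= s -> 16 <= s -> w <= u ->
  u - v * th / 6 <= w -> u - s = t / s -> - M <= t / s -> t / s <= M ->
  q * M <= 5 / 2 -> q * (v * th) <= 1 / 8 -> v * th <= 1 / 8 -> s - 1 <= u ->
  q / 2 <= w /\ `|w - s| * q <= s.
Proof.
move=> q0 qs s16 wu wl us hM1 hM2 hqM qvth vth u1.
split; first by lra.
have -> : `|w - s| * q = `|(w - s) * q| by rewrite normrM (gtr0_norm q0).
rewrite ler_norml.
apply/andP; split.
  have : q * (u - v * th / 6 - w) <= 0 by rewrite mulr_ge0_le0 //; lra.
  have : q * (- M - (u - s)) <= 0 by rewrite mulr_ge0_le0 //; lra.
  nra.
have : q * (w - u) <= 0 by rewrite mulr_ge0_le0 //; lra.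
have : q * ((u - s) - M) <= 0 by rewrite mulr_ge0_le0 //; lra.
nra.
Qed.

Lemma core (n : nat) (q x C c0 r : R) : 4 <= q -> `|x| <= q -> 0 < (n%:R : R) ->
  ln (n%:R : R) = q ^+ 4 / 2 ->
  let th := Fn n x / 2 / 2 in
  [/\ 0 < th /\ th <= q^-1, 0 < cos th, 0 < n%:R * sin th, q ^+ 2 <= 2 * (n%:R * th) &
  (`|r| <= C / (n%:R * sin th) ->
   `|ln (n%:R * Num.sqrt (2 * ln (n%:R : R))) +
     (n%:R ^+ 2 * ln (cos th) - 4^-1 * ln (n%:R * sin th) + c0 + r) - (c0 - x)|
     <= (37 + 2 * `|C|) / q)].
Proof.
move=> q4 hx n0 hL th.
have q0 : 0 < q by lra.
have thE : th = (q ^+ 2 + (x + 3 / 2 * ln q) / q ^+ 2) / n%:R by exact: theta_eq.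
move: thE hL n0; set N : R := n%:R => thE hL n0.
set s := q ^+ 2; set t := x + 3 / 2 * ln q; set u := s + t / s.
have sD : s = q ^+ 2 by []. have tD : t = x + 3 / 2 * ln q by [].
have uD : u = s + t / s by [].
rewrite -sD -tD -uD in thE.
clearbody u t s th N.
have sE : s = q * q by rewrite sD expr2.
have [s16 qs hts hts' hB] := S1 _ _ _ _ q4 hx sE tD.
have s0 : 0 < s by lra.
have [u1 u2] : s - 1 <= u /\ u <= s + 1.
  by move: hts'; rewrite uD ler_norml => /andP[? ?]; split; lra.
have hNth : N * th = u by rewrite thE mulrC divfK ?gt_eqF.
have hN : s * s * (s * s) / 8 <= N.
  have := @expR_ge1Dxn R (ln N) 1 (ltW _).
  rewrite lnK ?posrE // hL => /(_ _) h.
  have : 0 < q ^+ 4 / 2 by rewrite divr_gt0 // exprn_gt0.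
  move=> /h; rewrite /= (_ : q ^+ 4 = s * s); last by rewrite sD -exprD.
  rewrite (_ : (2`!)%:R = 2 :> R) // expr2.
  have -> : s * s / 2 * (s * s / 2) / 2 = s * s * (s * s) / 8 by field.
  lra.
have [th0 thq th1 v0 [v8 qvth vth vv]] := S2 _ _ _ _ _ q4 sE s16 u1 u2 hN hNth n0.
have hA : `|N ^+ 2 * ln (cos th) + u ^+ 2 / 2| <= 32 / q.
  have e : N ^+ 2 * ln (cos th) + u ^+ 2 / 2 = N ^+ 2 * (ln (cos th) + th ^+ 2 / 2).
    by rewrite -hNth; ring.
  rewrite e normrM ger0_norm ?sqr_ge0 //.
  have lb := @lncos_bound R th; rewrite (ltW th0) th1 in lb.
  have lb2 := ler_wpM2l (sqr_ge0 N) (lb isT).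
  apply: (le_trans lb2).
  have -> : N ^+ 2 * th ^+ 4 = (u * th) * (u * th) by rewrite -hNth; ring.
  exact: vv.
have cth : 0 < cos th.
  have := @cos_ge R th (ltW th0); rewrite expr2.
  have : th * th <= 1 by rewrite -expr2 expr_le1 // ltW.
  lra.
have sl := @sin_ge R th (ltW th0).
have su := @sin_le_id R th (ltW th0).
set w := N * sin th.
have wD : w = N * sin th by []. clearbody w.
have wu : w <= u by rewrite wD -hNth ler_pM2l.
have wl : u - (u * th) * th / 6 <= w.
  rewrite wD -hNth.
  have : N * (th - th ^+ 3 / 6) <= N * sin th by rewrite ler_pM2l.
  rewrite (_ : th ^+ 3 = th * th * th); last by rewrite !exprS expr0 mulr1 mulrA.
  have -> : N * th * th * th / 6 = N * (th * th * th / 6) by ring.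
  lra.
have us : u - s = t / s by rewrite uD; ring.
set M := `|t / s|.
have MD : M = `|t / s| by []. clearbody M.
have hM : - M <= t / s <= M by rewrite -ler_norml MD.
move: hM => /andP[hM1 hM2].
have hqM : q * M <= 5 / 2 by rewrite MD.
have [w0 hws] := S4 _ _ _ _ _ _ _ _ q0 qs s16 wu wl us hM1 hM2 hqM qvth vth u1.
have wp : 0 < w by lra.
set rho := w / s.
have rhoD : rho = w / s by []. clearbody rho.
have hrho : `|rho - 1| <= q^-1.
  have -> : rho - 1 = (w - s) / s by rewrite rhoD; field; rewrite gt_eqF.
  rewrite normrM normfV (gtr0_norm s0) ler_pdivrMr // mulrC.
  by rewrite ler_pdivlMr.
have hlr : `|ln rho| <= 2 * q^-1.
  apply: ln_near1 => //.
  rewrite -div1r ler_pdivrMr //; lra.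
have rho0 : 0 < rho by rewrite rhoD divr_gt0.
have lnsE : ln s = 2 * ln q by rewrite sD lnXn // mulr_natl.
have lnwE : ln w = ln rho + ln s.
  by rewrite -lnM ?posrE // rhoD divfK // gt_eqF.
have sqE : Num.sqrt (2 * ln N) = s.
  rewrite hL (_ : 2 * (q ^+ 4 / 2) = s ^+ 2); last by rewrite sD -exprM; field.
  by rewrite sqrtr_sqr gtr0_norm.
have lnNsE : ln (N * Num.sqrt (2 * ln N)) = s * s / 2 + ln s.
  rewrite sqE lnM ?posrE // hL (_ : q ^+ 4 = s * s) //.
  by rewrite sD -exprD.
split.
- split => //; rewrite -div1r ler_pdivlMr //; lra.
- exact: cth.
- by [].
- rewrite hNth; lra.
move=> hr.
have hr' : `|r| <= 2 * `|C| / q.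
  apply: (le_trans hr).
  apply: (@le_trans _ _ (`|C| / w)).
    by rewrite ler_pM2r ?invr_gt0 // real_ler_norm // num_real.
  have hw : w^-1 <= 2 / q.
    by rewrite -invf_div lef_pV2 ?posrE //; apply: divr_gt0.
  have := ler_wpM2l (normr_ge0 C) hw.
  by rewrite mulrA (mulrC `|C| 2).
rewrite lnwE lnNsE lnsE.
have eu : u ^+ 2 / 2 = s * s / 2 + t + t ^+ 2 / (2 * (s * s)).
  rewrite uD; field; by rewrite gt_eqF.
have -> : s * s / 2 + 2 * ln q +
  (N ^+ 2 * ln (cos th) - 4^-1 * (ln rho + 2 * ln q) + c0 + r) - (c0 - x) =
  (N ^+ 2 * ln (cos th) + u ^+ 2 / 2) - t ^+ 2 / (2 * (s * s)) - 4^-1 * ln rho + r.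
  by rewrite eu tD; field; rewrite gt_eqF.
have e1 : (37 + 2 * `|C|) / q = 32 / q + 4 / q + 4^-1 * (2 * q^-1) + 2 * `|C| / q + 1 / (2 * q).
  by field; rewrite gt_eqF.
rewrite e1.
have hq2 : 0 <= 1 / (2 * q) by rewrite divr_ge0 //; lra.
have hl4 : `|4^-1 * ln rho| <= 4^-1 * (2 * q^-1).
  have h4 : 0 <= 4^-1 :> R by rewrite invr_ge0.
  by rewrite normrM (ger0_norm h4); apply: ler_wpM2l.
apply: (le_trans (sum4 _ _ _ _ _ _ _ _ hA hB hl4 hr')).
by rewrite lerDl.
Qed.
End C.


Local Open Scope ring_scope.
Local Open Scope complex_scope.

Theorem lemma1 (R : realType) (c0 s0 : R) (hs0 : 0 < s0)
  (DIKZ : forall eps : R, 0 < eps ->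
     exists C : R, exists N : nat, forall n : nat, (N <= n)%N ->
     forall a : R, s0 / n%:R < a -> a < pi - eps ->
     exists r : R, `|r| <= C / (n%:R * sin (a / 2)) /\
       Dn n a = (expR (n%:R ^+ 2 * ln (cos (a / 2))
                       - 4^-1 * ln (n%:R * sin (a / 2)) + c0 + r))%:C)
  (x : R) :
  forall e : R, 0 < e -> exists N : nat, forall n : nat, (N <= n)%N ->
    `| (n%:R * Num.sqrt (2 * ln (n%:R : R)))%:C * Dn n (Fn n x / 2)
       - (expR (c0 - x))%:C | < e%:C.
Proof.
move=> e e0.
have [C [N1 HD]] := DIKZ 1 ltr01.
have X0 : 0 < expR (c0 - x) := expR_gt0 _.
move: X0; set X := expR (c0 - x) => X0.
have d10 : 0 < e / (4 * X + 2 * e) by rewrite divr_gt0 //; lra.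
move: d10; set d1 := e / (4 * X + 2 * e) => d10.
have d1h : d1 <= 1 / 2.
  rewrite /d1 ler_pdivrMr; last by lra.
  lra.
have d1e : 2 * X * d1 < e.
  rewrite /d1 mulrA ltr_pdivrMr; last by lra.
  nra.
have K0 : 0 < 37 + 2 * `|C| by have := normr_ge0 C; lra.
move: K0; set K := 37 + 2 * `|C| => K0.
have Kd0 : 0 <= K / d1 by rewrite divr_ge0 // ltW.
have hx0 := normr_ge0 x.
set Q := 4 + `|x| + s0 + K / d1 + 1.
have [m hm] : exists m : nat, expR (Q ^+ 4 / 2) < m%:R by exists (Num.trunc (expR (Q ^+ 4 / 2))).+1; exact: truncnS_gt.
exists (maxn N1 m) => n; rewrite geq_max => /andP[hn1 hn2].
have nY : expR (Q ^+ 4 / 2) < n%:R.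
  by apply: (lt_le_trans hm); rewrite ler_nat.
have n0 : 0 < (n%:R : R) by apply: lt_trans nY; exact: expR_gt0.
have lnn : Q ^+ 4 / 2 < ln (n%:R : R).
  by rewrite -[X in X < _]expRK ltr_ln ?posrE // expR_gt0.
have Q0 : 0 <= Q by rewrite /Q; lra.
have L0 : 0 < ln (n%:R : R).
  apply: le_lt_trans lnn; rewrite divr_ge0 // exprn_ge0 //.
set q := Num.sqrt (Num.sqrt (2 * ln (n%:R : R))).
have q0 : 0 <= q by apply: sqrtr_ge0.
have q4E : q ^+ 4 = 2 * ln (n%:R : R).
  rewrite (_ : 4%N = (2 * 2)%N) // exprM sqr_sqrtr ?sqrtr_ge0 // sqr_sqrtr //.
  by rewrite mulr_ge0 // ltW.
have hL : ln (n%:R : R) = q ^+ 4 / 2 by rewrite q4E; field.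
have Qq : Q <= q.
  rewrite -(@ler_pXn2r _ 4) ?nnegrE // q4E; lra.
have q4 : 4 <= q by rewrite /Q in Qq; lra.
have hxq : `|x| <= q by rewrite /Q in Qq; lra.
have s0q : s0 < q by rewrite /Q in Qq; lra.
have Kq : K / d1 < q by rewrite /Q in Qq; lra.
have Kq' : K < q * d1 by rewrite -ltr_pdivrMr.
have [[th0 thq] cth sp hq2 _] := @core R n q x C c0 0 q4 hxq n0 hL.
have hth : Fn n x / 2 = 2 * (Fn n x / 2 / 2) by field.
have ha1 : s0 / n%:R < Fn n x / 2.
  rewrite ltr_pdivrMr // hth.
  have : q <= q ^+ 2 by rewrite expr2 ler_peMl //; lra.
  lra.
have ha2 : Fn n x / 2 < pi - 1.
  have := pi_ge2 R.
  have : q^-1 <= 4^-1 by rewrite lef_pV2 ?posrE //; lra.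
  rewrite hth; lra.
have [r [hr ->]] := HD n hn1 _ ha1 ha2.
have [_ _ _ _ hfin] := @core R n q x C c0 r q4 hxq n0 hL.
have := hfin hr.
move: hfin => _.
set E := n%:R ^+ 2 * _ - _ + c0 + r.
set P := n%:R * Num.sqrt (2 * ln (n%:R : R)) => hdd.
rewrite -/K in hdd.
have P0 : 0 < P by rewrite /P mulr_gt0 // sqrtr_gt0 mulr_gt0.
have hdd' : `|ln P + E - (c0 - x)| <= 1 / 2.
  apply: (le_trans hdd); apply: (le_trans _ d1h).
  rewrite ler_pdivrMr; last by lra.
  lra.
have hdd2 : `|ln P + E - (c0 - x)| < d1.
  apply: (le_lt_trans hdd).
  rewrite ltr_pdivrMr; last by lra.
  lra.
rewrite -rmorphM -rmorphB normc_def /= expr0n /= addr0 sqrtr_sqr ltcR.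
have -> : P * expR E = expR (c0 - x + (ln P + E - (c0 - x))).
  have -> : c0 - x + (ln P + E - (c0 - x)) = ln P + E by ring.
  by rewrite expRD lnK ?posrE.
apply: (le_lt_trans (@exp_near R _ _ hdd')).
rewrite -/X.
apply: le_lt_trans d1e.
apply: ler_wpM2l; [lra | exact: ltW].
Qed.
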